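(* Let $\mathcal{A}$ be the adjacency matrix of a graph on nodes $1,\dots,N$ with $\mathcal{A}_{ii}=1$ for all $i$, and let $H$ be a finite-dimensional, proper LTI system (proper rational transfer matrix) whose input and output are each partitioned into $N$ sub-signals. If $H$ is TF-structured with respect to $\mathcal{A}$, then $H$ is $\mathcal{A}$-structured-realizable. If in addition the feedthrough term $H(\infty)$ is block diagonal, then $H$ is also $\mathcal{A}$-network-realizable. The converse does not hold: there exist a graph $\mathcal{A}$ and a system $H$ which is $\mathcal{A}$-structured-realizable (and even $\mathcal{A}$-network-realizable) but not TF-structured with respect to $\mathcal{A}$.
   Context: A matrix $M$ partitioned into $N\times N$ blocks is called $\mathcal{A}$-structured, written $M\in\mathcal{S}(\mathcal{A})$, if its $(i,j)$ block is zero whenever $\mathcal{A}_{ij}=0$. An LTI system $H$ with inputs and outputs partitioned into $N$ sub-signals is $\mathcal{A}$-structured-realizable if it has a state-space realization $H(s)=C(sI-A)^{-1}B+D$, with the state also partitioned into $N$ (possibly empty) sub-states, such that $A,B,C,D\in\mathcal{S}(\mathcal{A})$; it is $\mathcal{A}$-network-realizable if in addition either both $B,D$ or both $C,D$ are block diagonal. $H$ is TF-structured with respect to $\mathcal{A}$ if the $(i,j)$ block $H_{ij}(s)$ of its transfer matrix is identically zero whenever $\mathcal{A}_{ij}=0$. *)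

(* Defs.v *)
From HB Require Import structures.
From mathcomp Require Import all_boot all_order all_algebra.
From mathcomp Require Import fraction reals.
Set Implicit Arguments. Unset Strict Implicit. Unset Printing Implicit Defensive.
Import Order.TTheory GRing.Theory Num.Theory.
Local Open Scope ring_scope.

Notation ratF R := {fraction {poly R}}.

Notation "x %:F" := (@FracField.tofrac _ x).

Definition cst (R : realType) (a : R) : ratF R := (a%:P)%:F.

Definition strictly_proper (R : realType) (h : ratF R) : Prop :=
  exists p q : {poly R}, q != 0 /\ (size p < size q)%N /\ h = p%:F / q%:F.

(* D0 = H(oo): the transfer matrix H is proper with feedthrough D0, i.e.
   H - D0 is strictly proper entrywise. *)
Definition feedthrough (R : realType) p m (H : 'M[ratF R]_(p, m)) (D0 : 'M[R]_(p, m)) : Prop :=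
  forall i j, strictly_proper (H i j - cst (D0 i j)).

Definition proper_tf (R : realType) p m (H : 'M[ratF R]_(p, m)) : Prop :=
  exists D0, feedthrough H D0.

(* Block partitions are given by labelings: coordinate k of a signal belongs
   to sub-signal lbl k. *)
Definition structured (T : zmodType) N (Adj : 'I_N -> 'I_N -> bool) p m
  (lo : 'I_p -> 'I_N) (li : 'I_m -> 'I_N) (M : 'M[T]_(p, m)) : Prop :=
  forall i j, ~~ Adj (lo i) (li j) -> M i j = 0.

Definition block_diag (T : zmodType) N p m
  (lo : 'I_p -> 'I_N) (li : 'I_m -> 'I_N) (M : 'M[T]_(p, m)) : Prop :=
  forall i j, lo i != li j -> M i j = 0.

Definition tf (R : realType) n p m (A : 'M[R]_n) (B : 'M[R]_(n, m))
  (C : 'M[R]_(p, n)) (D : 'M[R]_(p, m)) : 'M[ratF R]_(p, m) :=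
  map_mx (@cst R) C *m invmx ((('X : {poly R})%:F)%:M - map_mx (@cst R) A)
    *m map_mx (@cst R) B + map_mx (@cst R) D.

Definition TF_structured (R : realType) N (Adj : 'I_N -> 'I_N -> bool) p m
  (lo : 'I_p -> 'I_N) (li : 'I_m -> 'I_N) (H : 'M[ratF R]_(p, m)) : Prop :=
  structured Adj lo li H.

Definition structured_realizable (R : realType) N (Adj : 'I_N -> 'I_N -> bool) p m
  (lo : 'I_p -> 'I_N) (li : 'I_m -> 'I_N) (H : 'M[ratF R]_(p, m)) : Prop :=
  exists (n : nat) (ls : 'I_n -> 'I_N) (A : 'M[R]_n) (B : 'M[R]_(n, m))
         (C : 'M[R]_(p, n)) (D : 'M[R]_(p, m)),
    [/\ structured Adj ls ls A, structured Adj ls li B,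
        structured Adj lo ls C, structured Adj lo li D & H = tf A B C D].

Definition network_realizable (R : realType) N (Adj : 'I_N -> 'I_N -> bool) p m
  (lo : 'I_p -> 'I_N) (li : 'I_m -> 'I_N) (H : 'M[ratF R]_(p, m)) : Prop :=
  exists (n : nat) (ls : 'I_n -> 'I_N) (A : 'M[R]_n) (B : 'M[R]_(n, m))
         (C : 'M[R]_(p, n)) (D : 'M[R]_(p, m)),
    [/\ structured Adj ls ls A, structured Adj ls li B,
        structured Adj lo ls C, structured Adj lo li D & H = tf A B C D] /\
      ((block_diag ls li B /\ block_diag lo li D) \/
        (block_diag lo ls C /\ block_diag lo li D)).

(* Main.v *)
Require Import Defs.
From HB Require Import structures.
From mathcomp Require Import all_boot all_order all_algebra.
From mathcomp Require Import fraction reals.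
From mathcomp Require Import zify ring.
Set Implicit Arguments. Unset Strict Implicit. Unset Printing Implicit Defensive.
Import Order.TTheory GRing.Theory Num.Theory.
Local Open Scope ring_scope.

Lemma natineq (a b K : nat) : (a < b)%N -> (b <= K.+1)%N -> (K.+1 - b + a <= K)%N.
Proof. lia. Qed.

Section S.
Variable R : realType.

Lemma sI_unit n (A : 'M[R]_n) :
  (('X : {poly R})%:F)%:M - map_mx (@cst R) A \in unitmx.
Proof.
have -> : (('X : {poly R})%:F)%:M - map_mx (@cst R) A =
          map_mx (@FracField.tofrac _) (char_poly_mx A).
  by apply/matrixP => i j; rewrite !mxE rmorphB rmorphMn.
rewrite unitmxE det_map_mx unitfE tofrac_eq0.
by have := char_poly_monic A; rewrite /char_poly => /monic_neq0.
Qed.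

Lemma tf_sol n p m (A : 'M[R]_n) (B : 'M[R]_(n, m)) (C : 'M[R]_(p, n)) D
  (X : 'M[ratF R]_(n, m)) :
  ((('X : {poly R})%:F)%:M - map_mx (@cst R) A) *m X = map_mx (@cst R) B ->
  tf A B C D = map_mx (@cst R) C *m X + map_mx (@cst R) D.
Proof.
move=> HX; rewrite /tf -HX -mulmxA mulKmx //; exact: sI_unit.
Qed.
Lemma sp_norm (h : ratF R) (p q : {poly R}) K : q != 0 -> (size p < size q)%N ->
  (size q <= K.+1)%N -> h = p%:F / q%:F ->
  exists P Q : {poly R}, [/\ Q \is monic, size Q = K.+1, (size P <= K)%N & h = P%:F / Q%:F].
Proof.
move=> qn0 spq sqK ->.
have lcn0 : lead_coef q != 0 by rewrite lead_coef_eq0.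
set c := (lead_coef q)^-1; set e := (K.+1 - size q)%N.
have cn0 : c != 0 by rewrite invr_eq0.
exists ((c *: p) * 'X^e), ((c *: q) * 'X^e); split.
- by rewrite monicMr ?monicXn // monicE lead_coefZ mulVf.
- rewrite size_mulXn ?scaler_eq0 ?negb_or ?cn0 // size_scale //; exact: subnK.
- have [->|pn0] := eqVneq p 0; first by rewrite scaler0 mul0r size_poly0.
  rewrite size_mulXn ?scaler_eq0 ?negb_or ?cn0 // size_scale //; exact: natineq.
- rewrite -!mul_polyC !tofracM.
  have h1 : (c%:P)%:F != 0 :> ratF R by rewrite tofrac_eq0 polyC_eq0.
  have h2 : ('X^e)%:F != 0 :> ratF R by rewrite tofrac_eq0 monic_neq0 ?monicXn.
  have h3 : q%:F != 0 :> ratF R by rewrite tofrac_eq0.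
  rewrite -[_ * _ * _ / _](@mulf_div _ ((c%:P)%:F * p%:F)) (divff h2) mulr1 -[_ * _ / _](@mulf_div _ (c%:P)%:F) (divff h1) mul1r.
  reflexivity.
Qed.

Lemma sp_cst (d : R) : strictly_proper (- cst d) -> d = 0.
Proof.
move=> [p [q [qn0 [spq E]]]].
have h3 : q%:F != 0 :> ratF R by rewrite tofrac_eq0.
have : p%:F = (- d%:P * q)%:F :> ratF R.
  by rewrite tofracM tofracN -/(cst d) E divfK.
move/eqP; rewrite tofrac_eq => /eqP Ep.
apply/eqP; apply: contraLR spq => dn0.
by rewrite Ep -polyCN size_Cmul ?oppr_eq0 // ltnn.
Qed.

Lemma poly_sumF (P : {poly R}) K : (size P <= K)%N ->
  P%:F = \sum_(k < K) cst (P`_k) * (('X : {poly R})%:F)^+k.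
Proof.
move=> sP.
have HP : P = \poly_(i < K) P`_i.
  apply/polyP => i; rewrite coef_poly; case: ltnP => // Ki.
  by rewrite nth_default // (leq_trans sP).
rewrite {1}HP poly_def rmorph_sum; apply: eq_bigr => k _.
rewrite -mul_polyC rmorphM rmorphXn; reflexivity.
Qed.

Lemma sum_ind (K c : nat) (f : nat -> ratF R) :
  \sum_(k < K) (c == k)%:R * f k = if (c < K)%N then f c else 0.
Proof.
elim: K => [|K IH]; first by rewrite big_ord0.
rewrite big_ord_recr /= IH.
case: (ltngtP c K) => H.
- by rewrite mul0r addr0 ltnS (ltnW H).
- by rewrite mul0r addr0 ltnS leqNgt H.
- by rewrite H ltnSn mul1r add0r.
Qed.

Lemma cstB (a b : R) : cst (a - b) = cst a - cst b.
Proof. by rewrite /cst polyCB rmorphB. Qed.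
Lemma cstM (a b : R) : cst (a * b) = cst a * cst b.
Proof. by rewrite /cst polyCM rmorphM. Qed.
Lemma cst_nat n : cst (n%:R : R) = n%:R.
Proof. by rewrite /cst polyC_natr rmorph_nat. Qed.
Lemma cst0 : cst (0 : R) = 0.
Proof. by rewrite /cst polyC0 rmorph0. Qed.

Lemma sum_only1 (I : finType) (i : I) (G : I -> ratF R) :
  (forall i', i' != i -> G i' = 0) -> \sum_i' G i' = G i.
Proof.
move=> H0; rewrite (bigD1 i) //= big1 ?addr0 //.
Qed.

Lemma sum_pairK (I J : finType) (G : I * J -> ratF R) :
  \sum_(x : I * J) G x = \sum_i \sum_j G (i, j).
Proof. by rewrite pair_big /=; apply: eq_bigr => -[]. Qed.

Lemma sumT (T : finType) (G : 'I_#|T| -> ratF R) :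
  \sum_(t < #|T|) G t = \sum_(x : T) G (enum_rank x).
Proof.
rewrite (reindex (@enum_rank T)) //; exists enum_val => x _.
  exact: enum_rankK.
exact: enum_valK.
Qed.

Lemma crow (P Q : {poly R}) K : (size P <= K)%N ->
  \sum_(k < K) cst (P`_k) * ((('X : {poly R})%:F) ^+ k / Q%:F) = P%:F / Q%:F.
Proof.
move=> sP; rewrite (poly_sumF sP) mulr_suml; apply: eq_bigr => k _.
by rewrite mulrA.
Qed.

Lemma comp_row (Q : {poly R}) K (k0 : 'I_K) : Q \is monic -> size Q = K.+1 ->
  (('X : {poly R})%:F) * ((('X : {poly R})%:F) ^+ k0 / Q%:F) -
  \sum_(k < K) cst (((k0.+1 == k)%:R - (k0.+1 == K)%:R * Q`_k)) *
      ((('X : {poly R})%:F) ^+ k / Q%:F) = (k0.+1 == K)%:R.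
Proof.
move=> mQ sQ.
set z := (('X : {poly R})%:F).
have Qn0 : Q%:F != 0 :> ratF R by rewrite tofrac_eq0 monic_neq0.
have EQ : Q%:F = z ^+ K + \sum_(k < K) cst (Q`_k) * z ^+ k.
  rewrite (poly_sumF (eq_leq sQ)) big_ord_recr /= addrC.
  have -> : Q`_K = 1 by move: mQ; rewrite monicE lead_coefE sQ => /eqP.
  by rewrite /cst polyC1 rmorph1 mul1r.
under eq_bigr do rewrite cstB cstM !cst_nat mulrBl -mulrA.
rewrite sumrB (sum_ind K k0.+1 (fun i => z ^+ i / Q%:F)) -mulr_sumr.
have := ltn_ord k0; rewrite leq_eqVlt => /orP[/eqP E|lt].
- rewrite E ltnn eqxx mul1r sub0r opprK mulrA -exprS E.
  have -> : \sum_(i < K) cst Q`_i * (z ^+ i / Q%:F) = (\sum_(i < K) cst Q`_i * z ^+ i) / Q%:F.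
    by rewrite mulr_suml; apply: eq_bigr => i _; rewrite mulrA.
  by rewrite -mulrDl -EQ divff.
- rewrite lt (ltn_eqF lt) mul0r subr0 mulrA -exprS subrr. reflexivity.
Qed.

Lemma D0_struct N (Adj : 'I_N -> 'I_N -> bool) p m (lo : 'I_p -> 'I_N) (li : 'I_m -> 'I_N)
  (H : 'M[ratF R]_(p, m)) D0 :
  feedthrough H D0 -> TF_structured Adj lo li H -> structured Adj lo li D0.
Proof.
move=> hfe hst i j nA; have := hfe i j; rewrite (hst i j nA) sub0r; exact: sp_cst.
Qed.

Lemma main N (Adj : 'I_N -> 'I_N -> bool) (reflA : forall i, Adj i i)
  p m (lo : 'I_p -> 'I_N) (li : 'I_m -> 'I_N) (H : 'M[ratF R]_(p, m)) D0 :
  feedthrough H D0 -> TF_structured Adj lo li H ->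
  exists (n : nat) (ls : 'I_n -> 'I_N) (A : 'M[R]_n) (B : 'M[R]_(n, m))
         (C : 'M[R]_(p, n)),
    [/\ structured Adj ls ls A, structured Adj ls li B,
        structured Adj lo ls C, structured Adj lo li D0 & H = tf A B C D0] /\
    block_diag lo ls C.
Proof.
move=> hfe hst.
have D0s := D0_struct hfe hst.
have /fin_all_exists [f hf] : forall x : 'I_p * 'I_m, exists pq : {poly R} * {poly R},
    [/\ pq.2 != 0, (size pq.1 < size pq.2)%N & H x.1 x.2 - cst (D0 x.1 x.2) = pq.1%:F / pq.2%:F].
  move=> [i j]; have [pp [qq [qn0 [spq E]]]] := hfe i j.
  by exists (pp, qq); split.
set K := \max_(x : 'I_p * 'I_m) size (f x).2.
have /fin_all_exists [g hg] : forall x : 'I_p * 'I_m, exists PQ : {poly R} * {poly R},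
    [/\ PQ.2 \is monic, size PQ.2 = K.+1, (size PQ.1 <= K)%N &
      H x.1 x.2 - cst (D0 x.1 x.2) = PQ.1%:F / PQ.2%:F].
  move=> x; have [h1 h2 h3] := hf x.
  have [P [Q [h4 h5 h6 h7]]] := sp_norm h1 h2 (leqW (@leq_bigmax _ (fun y => size (f y).2) x)) h3.
  by exists (P, Q); split.
pose P x := (g x).1; pose Q x := (g x).2.
pose T : finType := ('I_p * 'I_m * 'I_K)%type.
pose ev : 'I_#|T| -> T := enum_val.
pose cnd (x : 'I_p * 'I_m) := Adj (lo x.1) (li x.2).
pose z : ratF R := ('X : {poly R})%:F.
pose ls (s : 'I_#|T|) := lo (ev s).1.1.
pose A : 'M[R]_#|T| := \matrix_(s, t) if (ev s).1 == (ev t).1 then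
   (((ev s).2.+1 == (ev t).2)%:R - (((ev s).2).+1 == K)%:R * (Q (ev s).1)`_(ev t).2) else 0.
pose B : 'M[R]_(#|T|, m) := \matrix_(s, j)
   if ((ev s).1.2 == j) && cnd (ev s).1 then ((((ev s).2).+1 == K)%:R) else 0.
pose C : 'M[R]_(p, #|T|) := \matrix_(i, s)
   if i == (ev s).1.1 then (P (ev s).1)`_(ev s).2 else 0.
pose X : 'M[ratF R]_(#|T|, m) := \matrix_(s, j)
   if ((ev s).1.2 == j) && cnd (ev s).1 then z ^+ (ev s).2 / (Q (ev s).1)%:F else 0.
exists #|T|, ls, A, B, C.
have evK : forall x, ev (enum_rank x) = x := @enum_rankK T.
have HX : ((('X : {poly R})%:F)%:M - map_mx (@cst R) A) *m X = map_mx (@cst R) B.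
  apply/matrixP => s j; rewrite mulmxBl mul_scalar_mx !mxE sumT.
  under eq_bigr do rewrite !mxE evK.
  rewrite sum_pairK (sum_only1 (i:=(ev s).1)); last first.
    move=> ij ne; apply: big1 => k _; rewrite /= eq_sym (negbTE ne) cst0 mul0r.
    reflexivity.
  under eq_bigr do rewrite /= eqxx.
  case: ifP => _.
    have [h1 h2 _ _] := hg (ev s).1.
    by rewrite (comp_row _ h1 h2) cst_nat.
  rewrite big1 ?mulr0 ?subr0 ?cst0 //.
  move=> k _; rewrite mulr0; reflexivity.
split; [split|].
- move=> s t nA; rewrite mxE; case: eqP => // E; move: nA; rewrite /ls E reflA.
  by [].
- move=> s j nA; rewrite mxE; case: eqP => //= E; move: nA; rewrite /ls /cnd E => nA.
  by rewrite (negbTE nA).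
- move=> i s nA; rewrite mxE; case: eqP => // E; move: nA; rewrite /ls -E reflA.
  by [].
- exact: D0s.
- rewrite (tf_sol C D0 HX); apply/matrixP => i j; rewrite !mxE sumT.
  under eq_bigr do rewrite !mxE evK.
  rewrite sum_pairK sum_pairK (sum_only1 (i:=i)); last first.
    move=> i' ne; apply: big1 => j' _; apply: big1 => k _.
    rewrite /= eq_sym (negbTE ne) cst0 mul0r; reflexivity.
  rewrite (sum_only1 (i:=j)); last first.
    move=> j' ne; apply: big1 => k _.
    rewrite /= (negbTE ne) /= mulr0; reflexivity.
  under eq_bigr do rewrite /= !eqxx /=.
  have [_ _ h3 E] := hg (i, j).
  case hc: (cnd (i, j)).
    by rewrite (crow _ h3) -E subrK.
  rewrite big1; last by move=> k _; rewrite mulr0.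
  by rewrite (D0s i j (negbT hc)) cst0 (hst i j (negbT hc)) addr0.
- move=> i s ne; rewrite mxE; case: eqP => // E; move: ne; rewrite /ls -E eqxx.
  by [].
Qed.
Lemma X_neq0 : (('X : {poly R})%:F) != 0 :> ratF R.
Proof. by rewrite tofrac_eq0 polyX_eq0. Qed.

Lemma part2 : (exists (N : nat) (Adj : 'I_N -> 'I_N -> bool), (forall i, Adj i i) /\
   exists (p m : nat) (lo : 'I_p -> 'I_N) (li : 'I_m -> 'I_N)
          (H : 'M[ratF R]_(p, m)),
   [/\ proper_tf H, structured_realizable Adj lo li H,
       network_realizable Adj lo li H & ~ TF_structured Adj lo li H]).
Proof.
pose Adj := fun i j : 'I_3 => (i == j) || ((val i).+1 == val j).
exists 3, Adj; split; first by move=> i; rewrite /Adj eqxx.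
pose o0 := @Ordinal 3 0 isT; pose o1 := @Ordinal 3 1 isT; pose o2 := @Ordinal 3 2 isT.
pose lo := fun _ : 'I_1 => o0; pose li := fun _ : 'I_1 => o2.
pose ls := fun i : 'I_2 => if val i == 0%N then o2 else o1.
pose A : 'M[R]_2 := \matrix_(i, j) if (val i == 1%N) && (val j == 0%N) then 1 else 0.
pose B : 'M[R]_(2, 1) := \matrix_(i, j) if val i == 0%N then 1 else 0.
pose C : 'M[R]_(1, 2) := \matrix_(i, j) if val j == 1%N then 1 else 0.
pose D : 'M[R]_(1, 1) := 0.
pose s : ratF R := ('X : {poly R})%:F.
pose X : 'M[ratF R]_(2, 1) := \matrix_(i, j) if val i == 0%N then s^-1 else s^-2.
have sn0 : s != 0 := X_neq0.
have HX : ((('X : {poly R})%:F)%:M - map_mx (@cst R) A) *m X = map_mx (@cst R) B.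
  apply/matrixP => i j; rewrite !mxE !big_ord_recl big_ord0 !mxE /=.
  rewrite /cst.
  case: i => [[|[|i]] Hi] //=; rewrite ?mulr1n ?mulr0n ?rmorph0 ?rmorph1 /=.
  - by rewrite !subr0 mul0r !addr0 -/s mulfV.
  - by rewrite sub0r subr0 addr0 -/s mulN1r expr2 invfM mulrA mulfV // mul1r addNr.
have Htf := tf_sol C D HX.
exists 1%N, 1%N, lo, li, (tf A B C D).
have H00 : tf A B C D ord0 ord0 = s^-2.
  rewrite Htf !mxE !big_ord_recl big_ord0 !mxE /= /cst !polyC0 polyC1 !rmorph0 rmorph1.
  by rewrite mul0r add0r !addr0 div1r.
have Hst : [/\ structured Adj ls ls A, structured Adj ls li B,
        structured Adj lo ls C, structured Adj lo li D & tf A B C D = tf A B C D].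
  split => //.
  - by move=> [[|[|i]] Hi] [[|[|j]] Hj] //; rewrite mxE.
  - by move=> [[|[|i]] Hi] [[|j] Hj] //; rewrite mxE.
  - by move=> [[|i] Hi] [[|[|j]] Hj] //; rewrite mxE.
  - by move=> i j; rewrite mxE.
split.
- exists 0; move=> i j; rewrite (ord1 i) (ord1 j) H00.
  exists 1, ('X ^+ 2); split; [|split].
  + by rewrite expf_neq0 // polyX_eq0.
  + by rewrite size_polyXn size_poly1.
  + by rewrite mxE /cst polyC0 rmorph0 subr0 rmorph1 rmorphXn div1r.
- by exists 2%N, ls, A, B, C, D.
- exists 2%N, ls, A, B, C, D; split => //; left; split.
  + by move=> [[|[|i]] Hi] [[|j] Hj] //; rewrite mxE.
  + by move=> i j; rewrite mxE.
- move=> /(_ ord0 ord0 isT); rewrite H00 => /eqP; rewrite invr_eq0 expf_eq0 /=.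
  by rewrite (negbTE sn0).
Qed.
End S.

Unset Implicit Arguments.

Theorem lemma1 (R : realType) :
  (forall (N : nat) (Adj : 'I_N -> 'I_N -> bool), (forall i, Adj i i) ->
   forall (p m : nat) (lo : 'I_p -> 'I_N) (li : 'I_m -> 'I_N)
          (H : 'M[ratF R]_(p, m)),
   proper_tf H -> TF_structured Adj lo li H ->
   structured_realizable Adj lo li H /\
   (forall D0 : 'M[R]_(p, m), feedthrough H D0 -> block_diag lo li D0 ->
      network_realizable Adj lo li H)) /\
  (exists (N : nat) (Adj : 'I_N -> 'I_N -> bool), (forall i, Adj i i) /\
   exists (p m : nat) (lo : 'I_p -> 'I_N) (li : 'I_m -> 'I_N)
          (H : 'M[ratF R]_(p, m)),
   [/\ proper_tf H, structured_realizable Adj lo li H,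
       network_realizable Adj lo li H & ~ TF_structured Adj lo li H]).
Proof.
split; last exact: part2.
move=> N Adj reflA p m lo li H [D0 hfe] hst; split.
  have [n [ls [A [B [C [[h1 h2 h3 h4 h5] _]]]]]] := main reflA hfe hst.
  by exists n, ls, A, B, C, D0; split.
move=> D1 hfe1 hbd.
have [n [ls [A [B [C [[h1 h2 h3 h4 h5] hC]]]]]] := main reflA hfe1 hst.
exists n, ls, A, B, C, D1; split; first by split.
by right; split.
Qed.
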